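(* In the Setting below and under the Standing Assumption, let $x\in\mathbb{Q}\cap D$ be such that the Lyapunov exponent $\lambda(x)$ exists. Then for every $p\in\mathbb{Z}$, $$\sigma(x,p)\ge\frac{\max(0,\lambda(x))}{\ln 2}.$$
   Context: Setting. $D\subseteq\mathbb{R}$ is a compact interval and $f:D\to D$ is twice continuously differentiable on $D$ with $f''$ bounded. For $x\in D$ the orbit is $x_0=x$, $x_{n+1}=f(x_n)$. A floating-point number of precision $m$ is a real $s\cdot 2^{e-m}$ with $s,e\in\mathbb{Z}$, $|s|\le 2^m-1$; $rd_m(y)$ denotes rounding of $y$ to a nearest floating-point number of precision $m$. Let $L(a,e):=\sup\{|f'(y)|: y\in[a-e,a+e]\cap D\}$ and fix a function $\bar L$ with $L(a,e)\le\bar L(a,e)\le\min(\bar L_{max},\,L(a,e)+Ke)$ for constants $\bar L_{max},K\ge0$. For $x\in\mathbb{Q}\cap D$ and precision $m\ge1$ the computed sequence is $\hat x_0=rd_m(x)$, $\bar e_0=2^{-m}|\hat x_0|$, $\hat x_{n+1}=rd_m(f(\hat x_n))$, $\bar e_{n+1}=\bar L(\hat x_n,\bar e_n)\bar e_n+2^{-m}|\hat x_{n+1}|$ (all $\hat x_n$ assumed in $D$). For $N\in\mathbb{N}$, $p\in\mathbb{Z}$, $m_{min}(x,N,p)$ is the least $m\ge1$ such that the sequence computed at precision $m$ satisfies $\bar e_n\le\frac{10^{-p}}{1+10^{-p}}|\hat x_n|$ for all $n=0,\dots,N$. $\sigma(x,p):=\limsup_{N\to\infty} m_{min}(x,N,p)/N$.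 Standing Assumption: $x_n\ne0$ for all $n$ and $\lim_{N\to\infty}\mathrm{ld}(\min\{|x_n|:0\le n\le N\})/N=0$, $\mathrm{ld}=\log_2$. The Lyapunov exponent is $\lambda(x):=\lim_{n\to\infty}\frac1n\sum_{k=0}^{n-1}\ln|f'(f^k(x))|$ when the limit exists. *)

(* Defs.v *)
From Stdlib Require Import Reals Lra Lia ZArith QArith.
Open Scope R_scope.

Definition inD (a b x : R) : Prop := a <= x <= b.

Definition deriv_on_D (a b : R) (g g' : R -> R) : Prop :=
  forall x, inD a b x ->
    forall eps, 0 < eps -> exists delta, 0 < delta /\
      forall y, inD a b y -> y <> x -> Rabs (y - x) < delta ->
        Rabs ((g y - g x) / (y - x) - g' x) < eps.

Definition cont_on_D (a b : R) (g : R -> R) : Prop :=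
  forall x, inD a b x ->
    forall eps, 0 < eps -> exists delta, 0 < delta /\
      forall y, inD a b y -> Rabs (y - x) < delta -> Rabs (g y - g x) < eps.

Definition isFloat (m : nat) (y : R) : Prop :=
  exists s e : Z, (Z.abs s <= 2 ^ Z.of_nat m - 1)%Z /\
                  y = IZR s * powerRZ 2 (e - Z.of_nat m).

Definition is_rounding (rd : nat -> R -> R) : Prop :=
  forall m y, (1 <= m)%nat ->
    isFloat m (rd m y) /\
    forall z, isFloat m z -> Rabs (rd m y - y) <= Rabs (z - y).

Definition Lset (a b : R) (f' : R -> R) (c e : R) (v : R) : Prop :=
  exists y, c - e <= y <= c + e /\ inD a b y /\ v = Rabs (f' y).

Definition is_Lbar (a b : R) (f' : R -> R) (Lbar : R -> R -> R)
  (Lmax K : R) : Prop :=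
  forall c e, inD a b c -> 0 <= e ->
    forall L, is_lub (Lset a b f' c e) L ->
      L <= Lbar c e /\ Lbar c e <= Rmin Lmax (L + K * e).

Fixpoint comp_seq (f : R -> R) (rd : nat -> R -> R) (Lbar : R -> R -> R)
  (m : nat) (x : R) (n : nat) : R * R :=
  match n with
  | O => (rd m x, / 2 ^ m * Rabs (rd m x))
  | S k => let (xh, eb) := comp_seq f rd Lbar m x k in
           let xh' := rd m (f xh) in
           (xh', Lbar xh eb * eb + / 2 ^ m * Rabs xh')
  end.

Definition xhat f rd Lbar m x n := fst (comp_seq f rd Lbar m x n).
Definition ebar f rd Lbar m x n := snd (comp_seq f rd Lbar m x n).

(** Precision m is sufficient for N steps and p digits. *)
Definition good f rd Lbar (x : R) (N : nat) (p : Z) (m : nat) : Prop :=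
  forall n, (n <= N)%nat ->
    ebar f rd Lbar m x n <=
      powerRZ 10 (- p) / (1 + powerRZ 10 (- p)) * Rabs (xhat f rd Lbar m x n).

Definition is_mmin f rd Lbar (x : R) (N : nat) (p : Z) (m : nat) : Prop :=
  (1 <= m)%nat /\ good f rd Lbar x N p m /\
  forall m', (1 <= m')%nat -> good f rd Lbar x N p m' -> (m <= m')%nat.

(** sigma(x,p) = limsup_N m_min(x,N,p)/N  >=  c   (limsup in [-oo,+oo]):
    for every eps > 0, m_min(x,N,p)/N > c - eps for infinitely many N. *)
Definition sigma_ge f rd Lbar (x : R) (p : Z) (c : R) : Prop :=
  forall eps, 0 < eps -> forall N0 : nat, exists N m, (N0 <= N)%nat /\
    is_mmin f rd Lbar x N p m /\ c - eps < INR m / INR N.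

Fixpoint orbit (f : R -> R) (x : R) (n : nat) : R :=
  match n with O => x | S k => f (orbit f x k) end.

Definition ld (y : R) : R := ln y / ln 2.

Fixpoint min_abs_orbit (f : R -> R) (x : R) (N : nat) : R :=
  match N with
  | O => Rabs x
  | S k => Rmin (min_abs_orbit f x k) (Rabs (orbit f x (S k)))
  end.

Definition standing_assumption (f : R -> R) (x : R) : Prop :=
  (forall n, orbit f x n <> 0) /\
  Un_cv (fun N => ld (min_abs_orbit f x N) / INR N) 0.

(** The Lyapunov exponent of x exists (as a real number) and equals lam.
    The summands ln|f'(x_k)| must be finite, i.e. f'(x_k) <> 0. *)
Definition lyapunov_exponent (f f' : R -> R) (x lam : R) : Prop :=
  (forall k, f' (orbit f x k) <> 0) /\
  Un_cv (fun n => / INR n *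
           sum_f_R0 (fun k => ln (Rabs (f' (orbit f x k)))) (pred n)) lam.

(* Main.v *)
Require Import Defs.
From Stdlib Require Import Reals Lra Lia ZArith QArith Classical Wf_nat.
Open Scope R_scope.

Lemma deriv_cont a b g g' : deriv_on_D a b g g' -> cont_on_D a b g.
Proof.
  intros H x Hx eps Heps.
  destruct (H x Hx 1 Rlt_0_1) as [d [Hd Hy]].
  exists (Rmin d (eps / (Rabs (g' x) + 1))).
  assert (Hp : 0 < Rabs (g' x) + 1) by (pose proof (Rabs_pos (g' x)); lra).
  split. { apply Rmin_pos; auto. apply Rdiv_lt_0_compat; lra. }
  intros y Hy' Hyx.
  destruct (Req_dec y x) as [->|Hne]. { rewrite Rminus_diag, Rabs_R0; lra. }
  assert (Hyx1 : Rabs (y - x) < d) by (eapply Rlt_le_trans; [exact Hyx| apply Rmin_l]).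
  assert (Hyx2 : Rabs (y - x) < eps / (Rabs (g' x) + 1)) by (eapply Rlt_le_trans; [exact Hyx| apply Rmin_r]).
  specialize (Hy y Hy' Hne Hyx1).
  assert (Hnz : y - x <> 0) by lra.
  assert (E : g y - g x = ((g y - g x) / (y - x) - g' x) * (y - x) + g' x * (y - x)) by (field; auto).
  rewrite E.
  eapply Rle_lt_trans. apply Rabs_triang.
  rewrite !Rabs_mult.
  assert (Hq : Rabs (y - x) * (Rabs (g' x) + 1) < eps).
  { apply (Rmult_lt_compat_r (Rabs (g' x) + 1)) in Hyx2; auto.
    unfold Rdiv in Hyx2. rewrite Rmult_assoc, Rinv_l in Hyx2; lra. }
  pose proof (Rabs_pos (y - x)).
  assert (Rabs ((g y - g x) / (y - x) - g' x) * Rabs (y - x) <= 1 * Rabs (y-x)).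
  { apply Rmult_le_compat_r; lra. }
  nra.
Qed.

Definition clamp (a b t : R) := Rmax a (Rmin b t).

Lemma clamp_in a b t : a <= b -> inD a b (clamp a b t).
Proof. intros. unfold clamp, inD, Rmax, Rmin. repeat destruct Rle_dec; lra. Qed.

Lemma clamp_id a b t : inD a b t -> clamp a b t = t.
Proof. unfold clamp, inD, Rmax, Rmin. intros. repeat destruct Rle_dec; lra. Qed.

Lemma clamp_lip a b s t : Rabs (clamp a b s - clamp a b t) <= Rabs (s - t).
Proof. unfold clamp, Rmax, Rmin. unfold Rabs. repeat destruct Rle_dec; repeat destruct Rcase_abs; lra. Qed.

Lemma clamp_cont a b g : a <= b -> cont_on_D a b g -> forall t, continuity_pt (fun s => g (clamp a b s)) t.
Proof.
  intros Hab Hc t. unfold continuity_pt, continue_in, limit1_in, limit_in; simpl; unfold R_dist.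
  intros eps Heps.
  destruct (Hc (clamp a b t) (clamp_in a b t Hab) eps Heps) as [d [Hd H]].
  exists d; split; auto. intros y [_ Hy].
  apply H. apply clamp_in; auto. eapply Rle_lt_trans. apply clamp_lip. auto.
Qed.

Lemma interior_deriv a b g g' x : deriv_on_D a b g g' -> a < x < b -> derivable_pt_lim g x (g' x).
Proof.
  intros H Hx eps Heps.
  destruct (H x ltac:(unfold inD; lra) eps Heps) as [d [Hd Hy]].
  assert (Hp : 0 < Rmin d (Rmin (x - a) (b - x))) by (repeat apply Rmin_pos; lra).
  exists (mkposreal _ Hp). simpl. intros h Hh Hlt.
  assert (h1 : Rabs h < d) by (eapply Rlt_le_trans; [exact Hlt | apply Rmin_l]).
  assert (h2 : Rabs h < Rmin (x - a) (b - x)) by (eapply Rlt_le_trans; [exact Hlt | apply Rmin_r]).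
  assert (h3 : Rabs h < x - a) by (eapply Rlt_le_trans; [exact h2 | apply Rmin_l]).
  assert (h4 : Rabs h < b - x) by (eapply Rlt_le_trans; [exact h2 | apply Rmin_r]).
  assert (Hin : inD a b (x + h)) by (unfold inD; unfold Rabs in *; destruct Rcase_abs; lra).
  specialize (Hy (x + h) Hin ltac:(lra)).
  replace (x + h - x) with h in Hy by ring. apply Hy. auto.
Qed.

Lemma mvt_D a b g g' u v : deriv_on_D a b g g' -> inD a b u -> inD a b v -> u < v ->
  exists c, u < c < v /\ g v - g u = g' c * (v - u).
Proof.
  intros H Hu Hv Huv.
  assert (Hab : a <= b) by (unfold inD in *; lra).
  set (F := fun s => g (clamp a b s)).
  assert (HF : forall c, u < c < v -> derivable_pt_lim F c (g' c)).
  { intros c Hc. assert (Hcc : a < c < b) by (unfold inD in *; lra).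
    pose proof (interior_deriv a b g g' c H Hcc) as Hd.
    intros eps Heps. destruct (Hd eps Heps) as [d Hd'].
    assert (Hp : 0 < Rmin d (Rmin (c - a) (b - c))) by (destruct d; simpl; repeat apply Rmin_pos; lra).
    exists (mkposreal _ Hp). simpl. intros h Hh Hlt.
    assert (h1 : Rabs h < d) by (eapply Rlt_le_trans; [exact Hlt | apply Rmin_l]).
    assert (h2 : Rabs h < Rmin (c - a) (b - c)) by (eapply Rlt_le_trans; [exact Hlt | apply Rmin_r]).
    assert (h3 : Rabs h < c - a) by (eapply Rlt_le_trans; [exact h2 | apply Rmin_l]).
    assert (h4 : Rabs h < b - c) by (eapply Rlt_le_trans; [exact h2 | apply Rmin_r]).
    unfold F. rewrite (clamp_id a b (c + h)), (clamp_id a b c).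
    - apply Hd'; auto.
    - unfold inD; lra.
    - unfold inD; unfold Rabs in *; destruct Rcase_abs; lra. }
  assert (pr1 : forall c, u < c < v -> derivable_pt F c).
  { intros c Hc. exists (g' c). apply HF; auto. }
  assert (pr2 : forall c, u < c < v -> derivable_pt id c).
  { intros c Hc. apply derivable_pt_id. }
  destruct (MVT F id u v pr1 pr2 Huv) as [c [Pc Hc]].
  - intros c _. apply clamp_cont; auto. apply deriv_cont with g'; auto.
  - intros c _. apply derivable_continuous_pt, derivable_pt_id.
  - exists c. split; auto.
    rewrite (derive_pt_eq_0 F c (g' c) (pr1 c Pc) (HF c Pc)) in Hc.
    rewrite (derive_pt_eq_0 id c 1 (pr2 c Pc) (derivable_pt_lim_id c)) in Hc.
    unfold F, id in Hc. rewrite !clamp_id in Hc by auto. lra.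
Qed.

Lemma lip_D a b g g' u v L : deriv_on_D a b g g' -> inD a b u -> inD a b v ->
  (forall w, Rmin u v <= w <= Rmax u v -> Rabs (g' w) <= L) ->
  Rabs (g u - g v) <= L * Rabs (u - v).
Proof.
  intros H Hu Hv HL.
  destruct (Rtotal_order u v) as [Huv|[Huv|Huv]].
  - destruct (mvt_D a b g g' u v H Hu Hv Huv) as [c [Hc E]].
    rewrite <- Rabs_Ropp. replace (- (g u - g v)) with (g v - g u) by ring. rewrite E, Rabs_mult.
    rewrite (Rabs_minus_sym u v). apply Rmult_le_compat_r. apply Rabs_pos.
    apply HL. unfold Rmin, Rmax; destruct Rle_dec; lra.
  - subst. rewrite !Rminus_diag, Rabs_R0. assert (0 <= L).
    { eapply Rle_trans. apply Rabs_pos. apply (HL v). unfold Rmin, Rmax; destruct Rle_dec; lra. } lra.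
  - destruct (mvt_D a b g g' v u H Hv Hu Huv) as [c [Hc E]].
    rewrite E, Rabs_mult. apply Rmult_le_compat_r. apply Rabs_pos.
    apply HL. unfold Rmin, Rmax; destruct Rle_dec; lra.
Qed.

Lemma float_opp m z : isFloat m z -> isFloat m (- z).
Proof.
  intros [s [e [Hs ->]]]. exists (- s)%Z, e. split. rewrite Z.abs_opp; auto.
  rewrite opp_IZR. ring.
Qed.

Lemma float0 m : (1 <= m)%nat -> isFloat m 0.
Proof.
  intros. exists 0%Z, 0%Z. split. simpl. assert (1 <= 2 ^ Z.of_nat m)%Z.
  { pose proof (Z.pow_pos_nonneg 2 (Z.of_nat m)). lia. }
  lia. simpl. ring.
Qed.

Lemma float_pow m (e : Z) : (1 <= m)%nat -> isFloat m (powerRZ 2 e).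
Proof.
  intros Hm. exists 1%Z, (e + Z.of_nat m)%Z. split.
  - assert (2 <= 2 ^ Z.of_nat m)%Z.
    { replace 2%Z with (2 ^ 1)%Z at 1 by reflexivity. apply Z.pow_le_mono_r; lia. } simpl. lia.
  - replace (e + Z.of_nat m - Z.of_nat m)%Z with e by ring. simpl. ring.
Qed.

Lemma exists_exp (y : R) : 0 < y -> exists k : Z, powerRZ 2 k <= y < powerRZ 2 (k + 1).
Proof.
  intros Hy. set (r := ln y / ln 2). pose proof ln_lt_2.
  destruct (archimed r) as [H1 H2]. exists (up r - 1)%Z.
  rewrite !powerRZ_Rpower by lra. unfold Rpower.
  replace (up r - 1 + 1)%Z with (up r) by ring. rewrite minus_IZR. simpl.
  assert (Ey : y = exp (r * ln 2)).
  { unfold r. replace (ln y / ln 2 * ln 2) with (ln y) by (field; lra). rewrite exp_ln; auto. }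
  rewrite Ey. split.
  - destruct (Req_dec (IZR (up r) - 1) r) as [E|E]. rewrite E; lra.
    left. apply exp_increasing. apply Rmult_lt_compat_r; lra.
  - apply exp_increasing. apply Rmult_lt_compat_r; lra.
Qed.

Lemma two_pow_IZR m : 2 ^ m = IZR (2 ^ Z.of_nat m).
Proof. rewrite <- pow_IZR. reflexivity. Qed.

Lemma key_pos m y : (1 <= m)%nat -> 0 < y -> exists z P, isFloat m z /\ isFloat m P /\
  0 < P <= y /\ Rabs (z - y) <= / 2 ^ m * P.
Proof.
  intros Hm Hy. destruct (exists_exp y Hy) as [k [Hk1 Hk2]].
  set (t := powerRZ 2 (k + 1 - Z.of_nat m)).
  assert (Ht : 0 < t) by (apply powerRZ_lt; lra).
  assert (E1 : powerRZ 2 (k + 1) = t * 2 ^ m).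
  { unfold t. rewrite pow_powerRZ, <- powerRZ_add by lra. f_equal; ring. }
  assert (E0 : powerRZ 2 k = t * 2 ^ m / 2).
  { rewrite <- E1. rewrite powerRZ_add by lra. simpl. field. }
  assert (H2m : 2 <= 2 ^ m).
  { replace 2 with (2 ^ 1) at 1 by ring. apply Rle_pow; lra || lia. }
  rewrite E0 in Hk1. rewrite E1 in Hk2.
  set (u := y / t).
  assert (Hu1 : 2 ^ m / 2 <= u).
  { unfold u. apply (Rmult_le_reg_r t); auto. field_simplify; lra. }
  assert (Hu2 : u < 2 ^ m).
  { unfold u. apply (Rmult_lt_reg_r t); auto. field_simplify; lra. }
  destruct (archimed u) as [A1 A2].
  set (n := (up u - 1)%Z).
  assert (Hn1 : IZR n <= u) by (unfold n; rewrite minus_IZR; simpl; lra).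
  assert (Hn2 : u < IZR n + 1) by (unfold n; rewrite minus_IZR; simpl; lra).
  assert (Hnb : (0 <= n <= 2 ^ Z.of_nat m - 1)%Z).
  { split.
    - apply le_IZR. lra.
    - assert (IZR n < IZR (2 ^ Z.of_nat m)) by (rewrite <- two_pow_IZR; lra).
      apply lt_IZR in H. lia. }
  exists (if Rle_dec (u - IZR n) (1/2) then IZR n * t else IZR (n + 1) * t), (t * 2 ^ m / 2).
  split; [|split; [|split]].
  - destruct Rle_dec.
    + exists n, (k + 1)%Z. split. rewrite Z.abs_eq; lia. unfold t. reflexivity.
    + destruct (Z.eq_dec (n + 1) (2 ^ Z.of_nat m)) as [En|En].
      * rewrite En, <- two_pow_IZR, Rmult_comm, <- E1. apply float_pow; auto.
      * exists (n + 1)%Z, (k + 1)%Z. split. rewrite Z.abs_eq; lia. unfold t. reflexivity.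
  - rewrite <- E0. apply float_pow; auto.
  - split. apply Rdiv_lt_0_compat; [apply Rmult_lt_0_compat|]; lra. lra.
  - replace (/ 2 ^ m * (t * 2 ^ m / 2)) with (t / 2) by (field; lra).
    assert (Ey : y = u * t) by (unfold u; field; lra).
    destruct Rle_dec.
    + rewrite Ey. replace (IZR n * t - u * t) with (- ((u - IZR n) * t)) by ring.
      rewrite Rabs_Ropp, Rabs_right by nra. nra.
    + rewrite Ey, plus_IZR. simpl.
      replace ((IZR n + 1) * t - u * t) with ((IZR n + 1 - u) * t) by ring.
      rewrite Rabs_right by nra. nra.
Qed.

Lemma key m y : (1 <= m)%nat -> y <> 0 -> exists z P, isFloat m z /\ isFloat m P /\
  0 < Rabs P <= Rabs y /\ Rabs (P - y) = Rabs y - Rabs P /\ Rabs (z - y) <= / 2 ^ m * Rabs P.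
Proof.
  intros Hm Hy. destruct (Rlt_dec 0 y) as [Hp|Hn].
  - destruct (key_pos m y Hm Hp) as [z [P [Hz [HP [HP2 Hzy]]]]].
    exists z, P. rewrite !Rabs_right by lra. repeat split; auto; try lra.
    rewrite Rabs_left1 by lra. ring.
  - destruct (key_pos m (- y) Hm ltac:(lra)) as [z [P [Hz [HP [HP2 Hzy]]]]].
    exists (- z), (- P). split. apply float_opp; auto. split. apply float_opp; auto.
    rewrite (Rabs_left y), (Rabs_left (- P)) by lra. rewrite Rabs_right by lra.
    repeat split; try lra.
    replace (- z - y) with (- (z - - y)) by ring. rewrite Rabs_Ropp. lra.
Qed.

Lemma round_rel rd m y : is_rounding rd -> (1 <= m)%nat ->
  Rabs (rd m y - y) <= / 2 ^ m * Rabs (rd m y).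
Proof.
  intros Hrd Hm. destruct (Hrd m y Hm) as [_ Hnear].
  assert (H2 : 0 < / 2 ^ m) by (apply Rinv_0_lt_compat, pow_lt; lra).
  destruct (Req_dec y 0) as [->|Hy].
  - pose proof (Hnear 0 (float0 m Hm)). rewrite Rminus_diag, Rabs_R0 in H.
    pose proof (Rabs_pos (rd m 0 - 0)). assert (Rabs (rd m 0 - 0) = 0) by lra.
    rewrite H1. pose proof (Rabs_pos (rd m 0)). nra.
  - destruct (key m y Hm Hy) as [z [P [Hz [HP [HP1 [HP2 Hzy]]]]]].
    pose proof (Hnear z Hz). pose proof (Hnear P HP).
    destruct (Rle_dec (Rabs P) (Rabs (rd m y))) as [Hle|Hlt].
    + assert (/ 2 ^ m * Rabs P <= / 2 ^ m * Rabs (rd m y)) by (apply Rmult_le_compat_l; lra).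
      lra.
    + exfalso. pose proof (Rabs_triang_inv y (rd m y)). rewrite Rabs_minus_sym in H1. lra.
Qed.

Lemma xhat_0 f rd Lbar m x : xhat f rd Lbar m x 0 = rd m x.
Proof. reflexivity. Qed.
Lemma ebar_0 f rd Lbar m x : ebar f rd Lbar m x 0 = / 2 ^ m * Rabs (rd m x).
Proof. reflexivity. Qed.
Lemma xhat_S f rd Lbar m x n : xhat f rd Lbar m x (S n) = rd m (f (xhat f rd Lbar m x n)).
Proof. unfold xhat. simpl. destruct (comp_seq f rd Lbar m x n). reflexivity. Qed.
Lemma ebar_S f rd Lbar m x n : ebar f rd Lbar m x (S n) =
  Lbar (xhat f rd Lbar m x n) (ebar f rd Lbar m x n) * ebar f rd Lbar m x n
  + / 2 ^ m * Rabs (xhat f rd Lbar m x (S n)).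
Proof. rewrite xhat_S. unfold xhat, ebar. simpl. destruct (comp_seq f rd Lbar m x n). reflexivity. Qed.

Lemma inD_abs a b y : inD a b y -> Rabs y <= Rmax (Rabs a) (Rabs b).
Proof. unfold inD, Rmax, Rabs. intros. repeat destruct Rcase_abs; destruct Rle_dec; lra. Qed.

Lemma f'_bounded a b f' f'' : a <= b -> deriv_on_D a b f' f'' ->
  (exists M, forall y, inD a b y -> Rabs (f'' y) <= M) ->
  exists B, forall y, inD a b y -> Rabs (f' y) <= B.
Proof.
  intros Hab H [M HM]. exists (Rabs (f' a) + M * (b - a)).
  intros y Hy. assert (Ha : inD a b a) by (unfold inD; lra).
  pose proof (lip_D a b f' f'' y a M H Hy Ha) as L.
  assert (Hw : forall w, Rmin y a <= w <= Rmax y a -> Rabs (f'' w) <= M).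
  { intros w Hw. apply HM. unfold inD in *. unfold Rmin, Rmax in Hw. destruct Rle_dec; lra. }
  specialize (L Hw). pose proof (Rabs_triang_inv (f' y) (f' a)).
  assert (0 <= M) by (pose proof (HM a Ha); pose proof (Rabs_pos (f'' a)); lra).
  assert (Rabs (y - a) <= b - a) by (unfold inD in Hy; unfold Rabs; destruct Rcase_abs; lra).
  assert (M * Rabs (y - a) <= M * (b - a)) by (apply Rmult_le_compat_l; auto).
  lra.
Qed.

Lemma Lbar_props a b f' Lbar Lmax K c e :
  is_Lbar a b f' Lbar Lmax K ->
  (exists B, forall y, inD a b y -> Rabs (f' y) <= B) ->
  inD a b c -> 0 <= e ->
  (forall w, c - e <= w <= c + e -> inD a b w -> Rabs (f' w) <= Lbar c e) /\
  Lbar c e <= Lmax /\ 0 <= Lbar c e.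
Proof.
  intros HL [B HB] Hc He.
  destruct (completeness (Lset a b f' c e)) as [L HLu].
  - exists B. intros v [y [_ [Hy ->]]]. auto.
  - exists (Rabs (f' c)). exists c. split; [lra | split; [auto | reflexivity]].
  - destruct (HL c e Hc He L HLu) as [H1 H2].
    assert (Hup : forall w, c - e <= w <= c + e -> inD a b w -> Rabs (f' w) <= L).
    { intros w Hw HwD. apply (proj1 HLu). exists w. auto. }
    split; [|split].
    + intros w Hw HwD. specialize (Hup w Hw HwD). lra.
    + eapply Rle_trans. exact H2. apply Rmin_l.
    + assert (Rabs (f' c) <= L) by (apply Hup; auto; lra). pose proof (Rabs_pos (f' c)). lra.
Qed.

Lemma validity a b f f' rd Lbar Lmax K x m :
  (forall y, inD a b y -> inD a b (f y)) -> deriv_on_D a b f f' -> is_rounding rd ->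
  is_Lbar a b f' Lbar Lmax K -> (exists B, forall y, inD a b y -> Rabs (f' y) <= B) ->
  inD a b x -> (forall n, inD a b (xhat f rd Lbar m x n)) -> (1 <= m)%nat ->
  forall n, inD a b (orbit f x n) /\ 0 <= ebar f rd Lbar m x n /\
    Rabs (orbit f x n - xhat f rd Lbar m x n) <= ebar f rd Lbar m x n.
Proof.
  intros HfD Hf' Hrd HL HB HxD HxhD Hm.
  assert (H2 : 0 < / 2 ^ m) by (apply Rinv_0_lt_compat, pow_lt; lra).
  induction n as [|n [IH1 [IH2 IH3]]].
  - simpl. rewrite xhat_0, ebar_0. split; auto. split.
    + pose proof (Rabs_pos (rd m x)). nra.
    + rewrite Rabs_minus_sym. apply round_rel; auto.
  - set (xh := xhat f rd Lbar m x n) in *. set (e := ebar f rd Lbar m x n) in *.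
    destruct (Lbar_props a b f' Lbar Lmax K xh e HL HB (HxhD n) IH2) as [P1 [P2 P3]].
    rewrite ebar_S, xhat_S. fold xh e. simpl.
    split; [auto|split].
    + pose proof (Rabs_pos (rd m (f xh))). nra.
    + assert (Hlip : Rabs (f (orbit f x n) - f xh) <= Lbar xh e * Rabs (orbit f x n - xh)).
      { apply (lip_D a b f f'); auto. apply HxhD.
        intros w Hw. apply P1.
        - unfold Rmin, Rmax in Hw; destruct Rle_dec; unfold Rabs in IH3; destruct Rcase_abs; lra.
        - pose proof (HxhD n). fold xh in H. unfold inD in *. unfold Rmin, Rmax in Hw; destruct Rle_dec; lra. }
      pose proof (round_rel rd m (f xh) Hrd Hm).
      assert (Lbar xh e * Rabs (orbit f x n - xh) <= Lbar xh e * e) by (apply Rmult_le_compat_l; auto).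
      replace (f (orbit f x n) - rd m (f xh)) with ((f (orbit f x n) - f xh) - (rd m (f xh) - f xh)) by ring.
      eapply Rle_trans. apply Rabs_triang. rewrite Rabs_Ropp. lra.
Qed.

Fixpoint Ssum (f f' : R -> R) (x : R) (n : nat) : R :=
  match n with O => 0 | S k => Ssum f f' x k + ln (Rabs (f' (orbit f x k))) end.

Lemma lower a b f f' rd Lbar Lmax K x m :
  (forall y, inD a b y -> inD a b (f y)) -> deriv_on_D a b f f' -> is_rounding rd ->
  is_Lbar a b f' Lbar Lmax K -> (exists B, forall y, inD a b y -> Rabs (f' y) <= B) ->
  inD a b x -> (forall n, inD a b (xhat f rd Lbar m x n)) -> (1 <= m)%nat ->
  (forall k, f' (orbit f x k) <> 0) ->
  forall n, ebar f rd Lbar m x 0 * exp (Ssum f f' x n) <= ebar f rd Lbar m x n.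
Proof.
  intros HfD Hf' Hrd HL HB HxD HxhD Hm Hnz.
  pose proof (validity a b f f' rd Lbar Lmax K x m HfD Hf' Hrd HL HB HxD HxhD Hm) as V.
  induction n as [|n IH].
  - simpl. rewrite exp_0. lra.
  - simpl. rewrite exp_plus, exp_ln by (apply Rabs_pos_lt; auto).
    rewrite ebar_S.
    destruct (V n) as [V1 [V2 V3]].
    set (xh := xhat f rd Lbar m x n) in *. set (e := ebar f rd Lbar m x n) in *.
    destruct (Lbar_props a b f' Lbar Lmax K xh e HL HB (HxhD n) V2) as [P1 [P2 P3]].
    assert (Rabs (f' (orbit f x n)) <= Lbar xh e).
    { apply P1; auto. unfold Rabs in V3; destruct Rcase_abs; lra. }
    pose proof (Rabs_pos (xhat f rd Lbar m x (S n))).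
    assert (0 <= / 2 ^ m) by (left; apply Rinv_0_lt_compat, pow_lt; lra).
    pose proof (Rabs_pos (f' (orbit f x n))).
    assert (ebar f rd Lbar m x 0 * exp (Ssum f f' x n) * Rabs (f' (orbit f x n)) <= e * Rabs (f' (orbit f x n))) by (apply Rmult_le_compat_r; auto).
    assert (e * Rabs (f' (orbit f x n)) <= e * Lbar xh e) by (apply Rmult_le_compat_l; auto).
    nra.
Qed.

Lemma upper a b f f' rd Lbar Lmax K x m :
  (forall y, inD a b y -> inD a b (f y)) -> deriv_on_D a b f f' -> is_rounding rd ->
  is_Lbar a b f' Lbar Lmax K -> (exists B, forall y, inD a b y -> Rabs (f' y) <= B) ->
  inD a b x -> (forall n, inD a b (xhat f rd Lbar m x n)) -> (1 <= m)%nat -> 0 <= Lmax ->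
  forall n, ebar f rd Lbar m x n <= / 2 ^ m * Rmax (Rabs a) (Rabs b) * (Lmax + 1) ^ n.
Proof.
  intros HfD Hf' Hrd HL HB HxD HxhD Hm HLm.
  pose proof (validity a b f f' rd Lbar Lmax K x m HfD Hf' Hrd HL HB HxD HxhD Hm) as V.
  assert (H2 : 0 < / 2 ^ m) by (apply Rinv_0_lt_compat, pow_lt; lra).
  set (Bm := Rmax (Rabs a) (Rabs b)).
  induction n as [|n IH].
  - rewrite ebar_0. simpl. pose proof (inD_abs a b _ (HxhD 0%nat)). rewrite xhat_0 in H.
    fold Bm in H. nra.
  - rewrite ebar_S. destruct (V n) as [V1 [V2 V3]].
    set (xh := xhat f rd Lbar m x n) in *. set (e := ebar f rd Lbar m x n) in *.
    destruct (Lbar_props a b f' Lbar Lmax K xh e HL HB (HxhD n) V2) as [P1 [P2 P3]].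
    pose proof (inD_abs a b _ (HxhD (S n))). fold Bm in H.
    assert (1 <= (Lmax + 1) ^ n) by (apply pow_R1_Rle; lra).
    assert (Lbar xh e * e <= Lmax * e) by (apply Rmult_le_compat_r; auto).
    assert (Lmax * e <= Lmax * (/ 2 ^ m * Bm * (Lmax + 1) ^ n)) by (apply Rmult_le_compat_l; auto).
    assert (0 <= Bm) by (pose proof (Rabs_pos (xhat f rd Lbar m x (S n))); lra).
    assert (/ 2 ^ m * Rabs (xhat f rd Lbar m x (S n)) <= / 2 ^ m * Bm) by (apply Rmult_le_compat_l; lra).
    assert (/ 2 ^ m * Bm <= / 2 ^ m * Bm * (Lmax + 1) ^ n) by (assert (0 <= / 2 ^ m * Bm) by nra; nra).
    simpl. nra.
Qed.

Lemma min_abs_le f x N n : (n <= N)%nat -> min_abs_orbit f x N <= Rabs (orbit f x n).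
Proof.
  induction N as [|N IH]; intros Hn.
  - assert (n = 0%nat) by lia. subst. simpl. lra.
  - simpl. destruct (Nat.eq_dec n (S N)) as [->|Hne].
    + apply Rmin_r.
    + eapply Rle_trans. apply Rmin_l. apply IH. lia.
Qed.

Lemma min_abs_pos f x N : (forall n, orbit f x n <> 0) -> 0 < min_abs_orbit f x N.
Proof.
  intros H. induction N as [|N IH].
  - simpl. apply Rabs_pos_lt. apply (H 0%nat).
  - simpl. unfold Rmin. destruct Rle_dec; auto. apply Rabs_pos_lt. apply (H (S N)).
Qed.

Lemma pow2_ge n : INR n + 1 <= 2 ^ n.
Proof. induction n as [|n IH]. simpl. lra. rewrite S_INR. simpl. pose proof (pos_INR n). lra. Qed.

Lemma exists_good a b f f' rd Lbar Lmax K x p N :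
  (forall y, inD a b y -> inD a b (f y)) -> deriv_on_D a b f f' -> is_rounding rd ->
  is_Lbar a b f' Lbar Lmax K -> (exists B, forall y, inD a b y -> Rabs (f' y) <= B) ->
  inD a b x -> (forall m n, (1 <= m)%nat -> inD a b (xhat f rd Lbar m x n)) -> 0 <= Lmax ->
  (forall n, orbit f x n <> 0) ->
  exists m, (1 <= m)%nat /\ good f rd Lbar x N p m.
Proof.
  intros HfD Hf' Hrd HL HB HxD HxhD HLm Hnz.
  set (d := min_abs_orbit f x N).
  assert (Hd : 0 < d) by (apply min_abs_pos; auto).
  set (c := powerRZ 10 (- p) / (1 + powerRZ 10 (- p))).
  assert (Hp10 : 0 < powerRZ 10 (- p)) by (apply powerRZ_lt; lra).
  assert (Hc : 0 < c) by (unfold c; apply Rdiv_lt_0_compat; lra).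
  set (Bm := Rmax (Rabs a) (Rabs b)).
  assert (HBm : 0 <= Bm) by (pose proof (inD_abs a b x HxD); pose proof (Rabs_pos x); fold Bm in H; lra).
  set (C := Bm * (Lmax + 1) ^ N).
  assert (HC : 0 <= C) by (unfold C; apply Rmult_le_pos; auto; apply pow_le; lra).
  set (X := C * (1 + c) / (c * d)).
  destruct (archimed X) as [A1 _].
  set (m := S (Z.to_nat (up X))).
  assert (Hm1 : X < 2 ^ m).
  { pose proof (pow2_ge m). unfold m in *. rewrite S_INR in H.
    destruct (Z_le_gt_dec 0 (up X)).
    - rewrite INR_IZR_INZ, Z2Nat.id in H by auto. lra.
    - assert (X < 0) by (apply Rlt_trans with (IZR (up X)); auto; apply IZR_lt; lia).
      pose proof (pos_INR (Z.to_nat (up X))). lra. }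
  exists m. split. unfold m; lia.
  intros n Hn.
  assert (Hm : (1 <= m)%nat) by (unfold m; lia).
  pose proof (validity a b f f' rd Lbar Lmax K x m HfD Hf' Hrd HL HB HxD (fun n => HxhD m n Hm) Hm n) as [V1 [V2 V3]].
  pose proof (upper a b f f' rd Lbar Lmax K x m HfD Hf' Hrd HL HB HxD (fun n => HxhD m n Hm) Hm HLm n) as U.
  fold Bm in U. fold c.
  assert (HP : (Lmax + 1) ^ n <= (Lmax + 1) ^ N) by (apply Rle_pow; lra || lia).
  assert (H2 : 0 < 2 ^ m) by (apply pow_lt; lra).
  set (eps := / 2 ^ m) in *.
  assert (Heps : eps * 2 ^ m = 1) by (unfold eps; field; lra).
  assert (Heps0 : 0 < eps) by (unfold eps; apply Rinv_0_lt_compat; auto).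
  assert (U2 : ebar f rd Lbar m x n <= eps * C).
  { eapply Rle_trans. exact U. unfold C. rewrite <- Rmult_assoc. apply Rmult_le_compat_l; auto. nra. }
  assert (Hdn : d <= Rabs (orbit f x n)) by (apply min_abs_le; auto).
  assert (Hx : C * (1 + c) = X * (c * d)) by (unfold X; field; nra).
  assert (HXe : eps * (C * (1 + c)) <= c * d).
  { rewrite Hx. assert (0 < c * d) by nra.
    assert (eps * X <= 1) by (assert (eps * X <= eps * 2 ^ m) by (apply Rmult_le_compat_l; lra); lra).
    nra. }
  pose proof (Rabs_triang_inv (orbit f x n) (xhat f rd Lbar m x n)).

  set (e := ebar f rd Lbar m x n) in *.
  assert (e * (1 + c) <= c * d) by nra.
  assert (c * (d - e) <= c * Rabs (xhat f rd Lbar m x n)) by (apply Rmult_le_compat_l; lra).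
  lra.
Qed.

Lemma exists_mmin f rd Lbar x N p :
  (exists m, (1 <= m)%nat /\ good f rd Lbar x N p m) ->
  exists m, is_mmin f rd Lbar x N p m.
Proof.
  intros Hex.
  destruct (dec_inh_nat_subset_has_unique_least_element
              (fun m => (1 <= m)%nat /\ good f rd Lbar x N p m)) as [m [[[H1 H2] H3] _]].
  - intros n. apply classic.
  - exact Hex.
  - exists m. repeat split; auto.
Qed.

Lemma sum_Ssum f f' x n :
  sum_f_R0 (fun k => ln (Rabs (f' (orbit f x k)))) n = Ssum f f' x (S n).
Proof. induction n as [|n IH]. simpl. ring. simpl sum_f_R0. rewrite IH. reflexivity. Qed.

Lemma ln_le' x y : 0 < x -> x <= y -> ln x <= ln y.
Proof. intros. destruct H0. left. apply ln_increasing; auto. subst; lra. Qed.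

Theorem mainTheorem6
  (a b : R) (f f' f'' : R -> R) (rd : nat -> R -> R)
  (Lbar : R -> R -> R) (Lmax K : R) (x lam : R)
  (Hab : a <= b)
  (HfD : forall y, inD a b y -> inD a b (f y))
  (Hf' : deriv_on_D a b f f')
  (Hf'' : deriv_on_D a b f' f'')
  (Hf''c : cont_on_D a b f'')
  (Hf''b : exists M, forall y, inD a b y -> Rabs (f'' y) <= M)
  (Hrd : is_rounding rd)
  (HLmax : 0 <= Lmax) (HK : 0 <= K)
  (HLbar : is_Lbar a b f' Lbar Lmax K)
  (HxQ : exists q : Q, x = Q2R q)
  (HxD : inD a b x)
  (HxhatD : forall m n, (1 <= m)%nat -> inD a b (xhat f rd Lbar m x n))
  (HSA : standing_assumption f x)
  (Hlam : lyapunov_exponent f f' x lam) :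
  forall p : Z, sigma_ge f rd Lbar x p (Rmax 0 lam / ln 2).
Proof.
  intros p eps Heps N0.
  destruct HSA as [Hnz _]. destruct Hlam as [Hf'nz Hcv].
  pose proof (f'_bounded a b f' f'' Hab Hf'' Hf''b) as HB.
  pose proof ln_lt_2 as Hln2.
  set (Bm := Rmax (Rabs a) (Rabs b)).
  assert (Hx0 : 0 < Rabs x) by (apply Rabs_pos_lt; apply (Hnz 0%nat)).
  assert (HBm : 0 < Bm) by (pose proof (inD_abs a b x HxD); fold Bm in H; lra).
  set (K0 := ln (2 / 3 * Rabs x) - ln Bm).
  set (e' := eps * ln 2 / 2).
  assert (He' : 0 < e') by (unfold e'; nra).
  destruct (Hcv e' He') as [N1 HN1].
  destruct (archimed (Rabs K0 / e')) as [A1 _].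
  set (N2 := Z.to_nat (up (Rabs K0 / e'))).
  set (N := S (N0 + N1 + N2)).
  assert (HN2 : Rabs K0 / e' < INR N).
  { unfold N, N2. rewrite S_INR, !plus_INR. pose proof (pos_INR N0). pose proof (pos_INR N1).
    destruct (Z_le_gt_dec 0 (up (Rabs K0 / e'))).
    - rewrite (INR_IZR_INZ (Z.to_nat _)), Z2Nat.id by auto. lra.
    - assert (Rabs K0 / e' < 0) by (apply Rlt_trans with (IZR (up (Rabs K0 / e'))); auto; apply IZR_lt; lia).
      pose proof (pos_INR (Z.to_nat (up (Rabs K0 / e')))). lra. }
  destruct (exists_mmin f rd Lbar x N p
     (exists_good a b f f' rd Lbar Lmax K x p N HfD Hf' Hrd HLbar HB HxD HxhatD HLmax Hnz)) as [m Hmm].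
  exists N, m. split; [unfold N; lia|]. split; [auto|].
  destruct Hmm as [Hm [Hg _]].
  assert (HNpos : 0 < INR N) by (unfold N; rewrite S_INR; pose proof (pos_INR (N0 + N1 + N2)); lra).
  assert (Hmpos : 0 < INR m) by (apply lt_0_INR; lia).
  assert (Hr0 : 0 < INR m / INR N) by (apply Rdiv_lt_0_compat; auto).
  assert (H2m : 2 <= 2 ^ m) by (replace 2 with (2 ^ 1) at 1 by ring; apply Rle_pow; lra || lia).
  assert (Hpm : 0 < 2 ^ m) by lra.
  pose proof (lower a b f f' rd Lbar Lmax K x m HfD Hf' Hrd HLbar HB HxD (fun n => HxhatD m n Hm) Hm Hf'nz N) as Lo.
  pose proof (Hg N (Nat.le_refl N)) as HgN.
  set (c := powerRZ 10 (- p) / (1 + powerRZ 10 (- p))) in HgN.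
  assert (Hp10 : 0 < powerRZ 10 (- p)) by (apply powerRZ_lt; lra).
  assert (Hc1 : c <= 1) by (unfold c; apply (Rmult_le_reg_r (1 + powerRZ 10 (- p))); [lra|]; field_simplify; lra).
  assert (Hc0 : 0 < c) by (unfold c; apply Rdiv_lt_0_compat; lra).
  pose proof (inD_abs a b _ (HxhatD m N Hm)) as HxN. fold Bm in HxN.
  assert (HeN : ebar f rd Lbar m x N <= Bm).
  { assert (c * Rabs (xhat f rd Lbar m x N) <= 1 * Bm) by (apply Rmult_le_compat; try lra; apply Rabs_pos). lra. }
  rewrite ebar_0 in Lo.
  pose proof (round_rel rd m x Hrd Hm) as Rr.
  assert (Hrx : 2 / 3 * Rabs x <= Rabs (rd m x)).
  { assert (/ 2 ^ m <= / 2) by (apply Rinv_le_contravar; lra).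
    pose proof (Rabs_pos (rd m x)).
    assert (/ 2 ^ m * Rabs (rd m x) <= / 2 * Rabs (rd m x)) by (apply Rmult_le_compat_r; lra).
    pose proof (Rabs_triang_inv x (rd m x)). rewrite Rabs_minus_sym in H2. lra. }
  assert (Main : 2 / 3 * Rabs x * exp (Ssum f f' x N) <= Bm * 2 ^ m).
  { assert (/ 2 ^ m * (2 / 3 * Rabs x) * exp (Ssum f f' x N) <= / 2 ^ m * Rabs (rd m x) * exp (Ssum f f' x N)).
    { apply Rmult_le_compat_r. left; apply exp_pos. apply Rmult_le_compat_l; auto. left; apply Rinv_0_lt_compat; auto. }
    assert (E : 2 / 3 * Rabs x * exp (Ssum f f' x N) = 2 ^ m * (/ 2 ^ m * (2 / 3 * Rabs x) * exp (Ssum f f' x N))) by (field; lra).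
    rewrite E, (Rmult_comm Bm). apply Rmult_le_compat_l; lra. }
  apply ln_le' in Main; [| apply Rmult_lt_0_compat; [lra | apply exp_pos]].
  rewrite (ln_mult (2 / 3 * Rabs x)), ln_exp, (ln_mult Bm) in Main by (try apply pow_lt; try apply exp_pos; lra).
  rewrite ln_pow in Main by lra.
  assert (MainI : K0 + Ssum f f' x N <= INR m * ln 2) by (unfold K0; lra).
  specialize (HN1 N ltac:(unfold N; lia)). unfold R_dist in HN1.
  replace (pred N) with (N0 + N1 + N2)%nat in HN1 by (unfold N; lia).
  rewrite sum_Ssum in HN1. fold N in HN1.
  assert (HS : lam - e' < Ssum f f' x N / INR N).
  { unfold Rdiv. rewrite Rmult_comm. unfold Rabs in HN1; destruct Rcase_abs; lra. }
  assert (HK0 : - e' < K0 / INR N).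
  { assert (Rabs K0 < e' * INR N).
    { apply (Rmult_lt_compat_r e') in HN2; auto. unfold Rdiv in HN2.
      rewrite Rmult_assoc, Rinv_l in HN2; lra. }
    apply (Rmult_lt_reg_r (INR N)); auto. unfold Rdiv. rewrite Rmult_assoc, Rinv_l by lra.
    unfold Rabs in H; destruct Rcase_abs; nra. }
  assert (Hr : lam - 2 * e' < INR m / INR N * ln 2).
  { assert ((K0 + Ssum f f' x N) / INR N <= INR m * ln 2 / INR N).
    { unfold Rdiv. apply Rmult_le_compat_r; auto. left; apply Rinv_0_lt_compat; auto. }
    replace ((K0 + Ssum f f' x N) / INR N) with (K0 / INR N + Ssum f f' x N / INR N) in H by (field; lra).
    replace (INR m * ln 2 / INR N) with (INR m / INR N * ln 2) in H by (field; lra). lra. }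
  unfold Rmax. destruct Rle_dec.
  - apply (Rmult_lt_reg_r (ln 2)); [lra|]. replace ((lam / ln 2 - eps) * ln 2) with (lam - 2 * e') by (unfold e'; field; lra). lra.
  - replace (0 / ln 2) with 0 by (field; lra). lra.
Qed.
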